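(* Let $A$ and $B$ be layouts and $\bar S$ a nested tuple such that both $\mathrm{shape}(A)$ and $\mathrm{shape}(B)$ refine $\bar S$. Then $\Phi_A=\Phi_B$ if and only if $\mathrm{coal}(A,\bar S)=\mathrm{coal}(B,\bar S)$.
   Context: A nested tuple (of integers) is either an integer (depth $0$) or a finite tuple $(X_1,\dots,X_r)$ of nested tuples (rank $r$, modes $X_i$); its flattening $X^\flat$ lists the integer leaves left to right, $\mathrm{len}(X)$ is its length, $\mathrm{entry}_i(X)$ its $i$-th entry, $\mathrm{size}(X)$ the product of entries. A layout $L=S:D$ consists of nested tuples $S$ (positive) and $D$ (nonnegative) of the same nesting pattern; $L^\flat=S^\flat:D^\flat$; the layout function of a flat layout $(s_i):(d_i)$ is $\Phi(x)=\sum x_id_i$, $x_i=\lfloor x/(s_1\cdots s_{i-1})\rfloor\bmod s_i$, on $[0,\prod s_i)$, and $\Phi_L=\Phi_{L^\flat}$. Flat $\mathrm{coal}^\flat$: remove modes with $s_i=1$, then repeatedly replace adjacent modes $s_i,s_{i+1}:d_i,d_{i+1}$ with $d_{i+1}=s_id_i$ by $s_is_{i+1}:d_i$. For a layout $L$ with $\mathrm{coal}^\flat(L^\flat)=(s_1,\dots,s_k):(d_1,\dots,d_k)$: $\mathrm{coal}(L)$ is this flat layout if $k>1$, $s_1:d_1$ (depth $0$) if $k=1$, and $1:0$ if $k=0$. Refinement: $X'$ refines $X$ if $X$ is an integer equal to $\mathrm{size}(X')$, or both have depth $>0$, equal rank, and each mode of $X'$ refines the corresponding mode of $X$. If $S$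 refines $\bar S$ with $\mathrm{len}(\bar S)=m$, then $S$ is obtained from $\bar S$ by replacing its $i$-th leaf by a nested tuple $S_i$ (of size $\mathrm{entry}_i(\bar S)$); for a layout $L=S:D$ the $i$-th relative mode is $L_i=S_i:D_i$ with $D_i$ the corresponding part of $D$. The relative coalesce $\mathrm{coal}(L,\bar S)$ is the layout obtained from the nesting pattern of $\bar S$ by putting the layout $\mathrm{coal}(L_i)$ (shape and stride simultaneously) in place of the $i$-th leaf, for each $1\le i\le m$. *)

(* Defs.v *)
From Stdlib Require Import List Arith.
Import ListNotations.

Inductive ntup : Type :=
| NLeaf (n : nat)
| NNode (l : list ntup).

(* A layout S:D stored as a nested tuple of (shape, stride) pairs, so that S
   and D automatically share the same nesting pattern. *)
Inductive layout : Type :=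
| LLeaf (s d : nat)
| LNode (l : list layout).

Fixpoint shape (L : layout) : ntup :=
  match L with
  | LLeaf s _ => NLeaf s
  | LNode l => NNode (map shape l)
  end.

Fixpoint stride (L : layout) : ntup :=
  match L with
  | LLeaf _ d => NLeaf d
  | LNode l => NNode (map stride l)
  end.

Fixpoint nt_flat (X : ntup) : list nat :=
  match X with
  | NLeaf n => [n]
  | NNode l => flat_map nt_flat l
  end.

Definition nt_size (X : ntup) : nat := fold_right Nat.mul 1 (nt_flat X).

Fixpoint lay_flat (L : layout) : list (nat * nat) :=
  match L with
  | LLeaf s d => [(s, d)]
  | LNode l => flat_map lay_flat l
  end.

Definition is_layout (L : layout) : Prop :=
  Forall (fun n => 0 < n) (nt_flat (shape L)).

Definition flat_phi (m : list (nat * nat)) (x : nat) : nat :=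
  fold_right Nat.add 0
    (map (fun i =>
            let s := map fst m in
            let xi := (x / fold_right Nat.mul 1 (firstn i s)) mod (nth i s 1) in
            xi * nth i (map snd m) 0)
         (seq 0 (length m))).

Definition Phi (L : layout) (x : nat) : nat := flat_phi (lay_flat L) x.

Definition phi_eq (A B : layout) : Prop :=
  nt_size (shape A) = nt_size (shape B) /\
  forall x, x < nt_size (shape A) -> Phi A x = Phi B x.

(* Flat coalesce: drop modes with s_i = 1, then merge adjacent modes
   (s_i,d_i),(s_{i+1},d_{i+1}) with d_{i+1} = s_i d_i into (s_i s_{i+1}, d_i)
   until no merge is possible (merging is confluent; we merge right-to-left). *)
Fixpoint merge_modes (m : list (nat * nat)) : list (nat * nat) :=
  match m with
  | [] => []
  | (s1, d1) :: r =>
      match merge_modes r with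
      | (s2, d2) :: rest =>
          if Nat.eqb d2 (s1 * d1) then (s1 * s2, d1) :: rest
          else (s1, d1) :: (s2, d2) :: rest
      | [] => [(s1, d1)]
      end
  end.

Definition coal_flat (m : list (nat * nat)) : list (nat * nat) :=
  merge_modes (filter (fun p => negb (Nat.eqb (fst p) 1)) m).

Definition coal (L : layout) : layout :=
  match coal_flat (lay_flat L) with
  | [] => LLeaf 1 0
  | [(s, d)] => LLeaf s d
  | c => LNode (map (fun p => LLeaf (fst p) (snd p)) c)
  end.

Fixpoint refines (X' X : ntup) {struct X} : Prop :=
  match X with
  | NLeaf n => nt_size X' = n
  | NNode l =>
      match X' with
      | NLeaf _ => False
      | NNode l' =>
          (fix go (l' l : list ntup) {struct l} : Prop :=
             match l', l with
             | [], [] => True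
             | a' :: r', a :: r => refines a' a /\ go r' r
             | _, _ => False
             end) l' l
      end
  end.

(* Relative coalesce coal(L, Sbar): replace the i-th leaf of Sbar by coal(L_i),
   L_i being the i-th relative mode of L. (Only meaningful when shape L
   refines Sbar; the fallback branches are never used in that case.) *)
Fixpoint rel_coal (L : layout) (X : ntup) {struct X} : layout :=
  match X with
  | NLeaf _ => coal L
  | NNode l =>
      match L with
      | LLeaf _ _ => L
      | LNode ls =>
          LNode ((fix go (ls : list layout) (l : list ntup) {struct l} : list layout :=
                    match ls, l with
                    | a :: r, b :: r' => rel_coal a b :: go r r'
                    | _, _ => []
                    end) ls l)
      end
  end.

(* Main.v *)
Require Import Defs.
From Stdlib Require Import List Arith Lia.
Import ListNotations.

Fixpoint phir (m : list (nat * nat)) (x : nat) : nat :=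
  match m with
  | [] => 0
  | (s, d) :: r => (x mod s) * d + phir r (x / s)
  end.

Definition prodl (l : list nat) : nat := fold_right Nat.mul 1 l.
Definition pr (m : list (nat * nat)) : nat := prodl (map fst m).

Lemma flat_phi_phir m x : flat_phi m x = phir m x.
Proof.
  revert x; induction m as [|[s d] r IH]; intro x; [reflexivity|].
  unfold flat_phi. cbn [length seq map fold_right].
  rewrite <- seq_shift, map_map.
  cbn [firstn fold_right nth map fst snd].
  rewrite Nat.div_1_r. cbn [phir]. f_equal.
  rewrite <- IH. unfold flat_phi. f_equal. apply map_ext. intro i.
  rewrite Nat.Div0.div_div. reflexivity.
Qed.

Lemma phir_filter m x : phir (filter (fun p => negb (Nat.eqb (fst p) 1)) m) x = phir m x.
Proof.
  revert x; induction m as [|[s d] r IH]; intro x; [reflexivity|].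
  cbn [filter fst]. destruct (Nat.eqb_spec s 1) as [->|Hs]; cbn [negb phir].
  - rewrite IH, Nat.mod_1_r, Nat.div_1_r; reflexivity.
  - rewrite IH; reflexivity.
Qed.

Lemma pr_filter m : pr (filter (fun p => negb (Nat.eqb (fst p) 1)) m) = pr m.
Proof.
  induction m as [|[s d] r IH]; [reflexivity|].
  cbn [filter fst]. destruct (Nat.eqb_spec s 1) as [->|Hs]; cbn [negb].
  - unfold pr in *; simpl; lia.
  - unfold pr in *; simpl; lia.
Qed.

Lemma merge_phi_pr m : (forall x, phir (merge_modes m) x = phir m x) /\ pr (merge_modes m) = pr m.
Proof.
  induction m as [|[s1 d1] r [IH1 IH2]]; [split; reflexivity|].
  cbn [merge_modes].
  destruct (merge_modes r) as [|[s2 d2] rest] eqn:E.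
  - split.
    + intro x. cbn [phir]. rewrite <- IH1. reflexivity.
    + unfold pr in *; simpl in *; lia.
  - destruct (Nat.eqb_spec d2 (s1 * d1)) as [Hd|Hd].
    + split.
      * intro x. cbn [phir]. rewrite <- IH1. cbn [phir].
        rewrite Nat.Div0.mod_mul_r, Nat.Div0.div_div, Hd. nia.
      * unfold pr in *; simpl in *; lia.
    + split.
      * intro x. cbn [phir]. rewrite <- IH1. reflexivity.
      * unfold pr in *; simpl in *; lia.
Qed.

Fixpoint normal (m : list (nat * nat)) : Prop :=
  match m with
  | [] => True
  | (s, d) :: r => 1 < s /\ match r with [] => True | (t, e) :: _ => e <> s * d end /\ normal r
  end.

Lemma merge_normal m : Forall (fun p => 1 < fst p) m -> normal (merge_modes m).
Proof.
  induction m as [|[s1 d1] r IH]; intro H; [exact I|].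
  inversion H as [|? ? H1 Hr]; subst. specialize (IH Hr). cbn [fst] in H1.
  cbn [merge_modes].
  destruct (merge_modes r) as [|[s2 d2] rest] eqn:E.
  - cbn. auto.
  - destruct (Nat.eqb_spec d2 (s1 * d1)) as [Hd|Hd].
    + cbn in IH |- *. destruct IH as (Hs2 & Hn & Hrest).
      split; [nia|]. split; [|exact Hrest].
      destruct rest as [|[s3 d3] rr]; [exact I|]. subst. nia.
    + cbn in IH |- *. tauto.
Qed.

Lemma phir_0 m : phir m 0 = 0.
Proof. induction m as [|[s d] r IH]; [reflexivity|]. cbn. rewrite Nat.Div0.mod_0_l, Nat.Div0.div_0_l, IH. reflexivity. Qed.

Lemma normal_pr_pos m : normal m -> 0 < pr m.
Proof.
  induction m as [|[s d] r IH]; intro H; [unfold pr; simpl; lia|].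
  cbn in H. destruct H as (H1 & _ & H3). unfold pr in *; simpl. specialize (IH H3). nia.
Qed.

Lemma normal_tail s d r : normal ((s, d) :: r) -> normal r.
Proof. cbn. tauto. Qed.

Lemma uniq_aux s d r1 t r2 :
  normal ((s, d) :: r1) -> normal ((t, d) :: r2) ->
  pr ((s, d) :: r1) = pr ((t, d) :: r2) ->
  (forall x, x < pr ((s, d) :: r1) -> phir ((s, d) :: r1) x = phir ((t, d) :: r2) x) ->
  s < t -> False.
Proof.
  intros N1 N2 Hp Hf Hlt.
  assert (P2 := normal_pr_pos _ (normal_tail _ _ _ N2)).
  assert (Ht : t <= pr ((t, d) :: r2)) by (unfold pr in *; simpl; nia).
  specialize (Hf s ltac:(lia)). cbn [phir] in Hf.
  rewrite Nat.Div0.mod_same, Nat.div_same in Hf by (cbn in N1; lia).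
  rewrite Nat.mod_small, Nat.div_small, phir_0 in Hf by lia.
  destruct r1 as [|[s2 d2] rr].
  - unfold pr in *; simpl in *. cbn in N1. nia.
  - cbn in N1. destruct N1 as (H1 & H2 & H3 & _).
    cbn [phir] in Hf. rewrite Nat.mod_small, Nat.div_small, phir_0 in Hf by lia. lia.
Qed.

Lemma normal_unique c1 : forall c2, normal c1 -> normal c2 -> pr c1 = pr c2 ->
  (forall x, x < pr c1 -> phir c1 x = phir c2 x) -> c1 = c2.
Proof.
  induction c1 as [|[s d] r1 IH]; intros c2 N1 N2 Hp Hf.
  - destruct c2 as [|[t e] r2]; [reflexivity|].
    exfalso. cbn in N2. destruct N2 as (H1 & _ & H3).
    assert (P := normal_pr_pos _ H3). unfold pr in *; simpl in *. nia.
  - destruct c2 as [|[t e] r2].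
    + exfalso. cbn in N1. destruct N1 as (H1 & _ & H3).
      assert (P := normal_pr_pos _ H3). unfold pr in *; simpl in *. nia.
    + assert (P1 := normal_pr_pos _ (normal_tail _ _ _ N1)).
      assert (P2 := normal_pr_pos _ (normal_tail _ _ _ N2)).
      assert (Hs1 : 1 < s) by (cbn in N1; tauto).
      assert (Ht1 : 1 < t) by (cbn in N2; tauto).
      assert (Hde : d = e).
      { specialize (Hf 1 ltac:(unfold pr in *; simpl; nia)). cbn [phir] in Hf.
        rewrite !Nat.mod_small, !Nat.div_small, !phir_0 in Hf by lia. lia. }
      subst e.
      assert (Hst : s = t).
      { destruct (Nat.lt_total s t) as [H|[H|H]]; [|exact H|].
        - exfalso; eapply uniq_aux; [exact N1|exact N2|exact Hp|exact Hf|exact H].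
        - exfalso; eapply (uniq_aux t d r2 s r1); eauto.
          intros x Hx. symmetry. apply Hf. lia. }
      subst t.
      assert (Hpr : pr r1 = pr r2).
      { unfold pr in Hp; simpl in Hp. apply (Nat.mul_cancel_l _ _ s); [lia|]. exact Hp. }
      f_equal. apply IH; [exact (normal_tail _ _ _ N1)|exact (normal_tail _ _ _ N2)|exact Hpr|].
      * intros y Hy. specialize (Hf (y * s) ltac:(unfold pr; simpl; fold (pr r1); nia)).
        cbn [phir] in Hf. rewrite Nat.Div0.mod_mul, Nat.div_mul in Hf by lia. lia.
Qed.

Definition feq (m1 m2 : list (nat * nat)) : Prop :=
  pr m1 = pr m2 /\ forall x, x < pr m1 -> phir m1 x = phir m2 x.

Lemma coal_flat_normal m : Forall (fun p => 0 < fst p) m -> normal (coal_flat m).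
Proof.
  intro H. apply merge_normal. rewrite Forall_forall in *. intros p Hp.
  apply filter_In in Hp. destruct Hp as [Hp Hq]. specialize (H p Hp).
  destruct (Nat.eqb_spec (fst p) 1); cbn in Hq; [discriminate|lia].
Qed.

Lemma coal_flat_phi m x : phir (coal_flat m) x = phir m x.
Proof. unfold coal_flat. rewrite (proj1 (merge_phi_pr _)). apply phir_filter. Qed.

Lemma coal_flat_pr m : pr (coal_flat m) = pr m.
Proof. unfold coal_flat. rewrite (proj2 (merge_phi_pr _)). apply pr_filter. Qed.

Lemma feq_coal_flat m1 m2 : Forall (fun p => 0 < fst p) m1 -> Forall (fun p => 0 < fst p) m2 ->
  (feq m1 m2 <-> coal_flat m1 = coal_flat m2).
Proof.
  intros H1 H2. split.
  - intros [Hp Hf]. apply normal_unique; auto using coal_flat_normal.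
    + rewrite !coal_flat_pr; exact Hp.
    + intros x Hx. rewrite coal_flat_pr in Hx. rewrite !coal_flat_phi. auto.
  - intro E. split.
    + rewrite <- (coal_flat_pr m1), <- (coal_flat_pr m2), E. reflexivity.
    + intros x _. rewrite <- (coal_flat_phi m1), <- (coal_flat_phi m2), E. reflexivity.
Qed.

Definition cl (c : list (nat * nat)) : layout :=
  match c with
  | [] => LLeaf 1 0
  | [(s, d)] => LLeaf s d
  | c => LNode (map (fun p => LLeaf (fst p) (snd p)) c)
  end.

Lemma map_leaf_inj c1 c2 :
  map (fun p : nat * nat => LLeaf (fst p) (snd p)) c1 = map (fun p => LLeaf (fst p) (snd p)) c2 -> c1 = c2.
Proof.
  revert c2; induction c1 as [|[a b] r IH]; intros [|[a' b'] r'] H; try discriminate; [reflexivity|].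
  cbn in H. injection H as -> -> H. f_equal. auto.
Qed.

Lemma cl_inj c1 c2 : normal c1 -> normal c2 -> cl c1 = cl c2 -> c1 = c2.
Proof.
  intros N1 N2 H.
  destruct c1 as [|[s d] [|[s' d'] r]]; destruct c2 as [|[t e] [|[t' e'] r2]];
    cbn in H, N1, N2; try discriminate; try reflexivity.
  - injection H as <- <-. lia.
  - injection H as -> ->. lia.
  - injection H as -> ->. reflexivity.
  - apply map_leaf_inj. exact (f_equal (fun L => match L with LNode l => l | _ => [] end) H).
Qed.


Lemma coal_cl L : coal L = cl (coal_flat (lay_flat L)).
Proof. unfold coal, cl. destruct (coal_flat (lay_flat L)) as [|[s d] [|]]; reflexivity. Qed.

Lemma leaf_case A B :
  Forall (fun p => 0 < fst p) (lay_flat A) -> Forall (fun p => 0 < fst p) (lay_flat B) ->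
  (feq (lay_flat A) (lay_flat B) <-> coal A = coal B).
Proof.
  intros H1 H2. rewrite feq_coal_flat by assumption.
  rewrite !coal_cl.
  split; [intros ->; reflexivity|].
  apply cl_inj; apply coal_flat_normal; assumption.
Qed.

Definition posl (m : list (nat * nat)) := Forall (fun p => 0 < fst p) m.

Lemma pr_app m r : pr (m ++ r) = pr m * pr r.
Proof. unfold pr. rewrite map_app. induction (map fst m); simpl; lia. Qed.

Lemma pr_pos m : posl m -> 0 < pr m.
Proof. induction 1 as [|[s d] r H _ IH]; unfold pr in *; simpl in *; nia. Qed.

Lemma phir_app m r x : posl m -> phir (m ++ r) x = phir m (x mod pr m) + phir r (x / pr m).
Proof.
  intro H; revert x; induction H as [|[s d] m Hs Hm IH]; intro x.
  - change (phir r x = 0 + phir r (x / 1)). rewrite Nat.div_1_r. reflexivity.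
  - cbn [fst] in Hs. cbn [app phir]. rewrite IH.
    assert (Pm := pr_pos _ Hm).
    replace (pr ((s, d) :: m)) with (s * pr m) by reflexivity.
    rewrite <- Nat.Div0.div_div.
    rewrite Nat.Div0.mod_mul_r.
    assert (Hx : x mod s < s) by (apply Nat.mod_upper_bound; lia).
    replace (x mod s + s * ((x / s) mod pr m)) with (x mod s + ((x / s) mod pr m) * s) by lia.
    rewrite Nat.Div0.mod_add, Nat.div_add by lia.
    rewrite (Nat.mod_small (x mod s)) by lia. rewrite (Nat.div_small (x mod s)) by lia.
    simpl. lia.
Qed.

Lemma block m1 m2 R1 R2 : posl m1 -> posl m2 -> posl R1 -> posl R2 -> pr m1 = pr m2 -> pr R1 = pr R2 ->
  (feq (m1 ++ R1) (m2 ++ R2) <-> feq m1 m2 /\ feq R1 R2).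
Proof.
  intros H1 H2 H3 H4 E1 E2. unfold feq. rewrite !pr_app.
  assert (P := pr_pos _ H1). assert (Q := pr_pos _ H3).
  split.
  - intros [_ Hf]. split; split; auto.
    + intros y Hy. specialize (Hf y ltac:(nia)).
      rewrite !phir_app in Hf by assumption. rewrite <- E1 in Hf.
      rewrite Nat.mod_small, Nat.div_small, !phir_0 in Hf by lia. lia.
    + intros z Hz. specialize (Hf (z * pr m1) ltac:(nia)).
      rewrite !phir_app in Hf by assumption. rewrite <- E1 in Hf.
      rewrite Nat.Div0.mod_mul, Nat.div_mul, !phir_0 in Hf by lia. lia.
  - intros [[_ Ha] [_ Hb]]. split; [congruence|].
    intros x Hx. rewrite !phir_app by assumption. rewrite <- E1.
    rewrite Ha, Hb; [reflexivity| |].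
    + apply Nat.Div0.div_lt_upper_bound. nia.
    + apply Nat.mod_upper_bound. lia.
Qed.

Fixpoint ntup_ind2 (P : ntup -> Prop) (HL : forall n, P (NLeaf n))
  (HN : forall l, Forall P l -> P (NNode l)) (X : ntup) : P X :=
  match X with
  | NLeaf n => HL n
  | NNode l => HN l ((fix go (l : list ntup) : Forall P l :=
                        match l with
                        | [] => Forall_nil _
                        | x :: r => Forall_cons _ (ntup_ind2 P HL HN x) (go r)
                        end) l)
  end.

Fixpoint layout_ind2 (P : layout -> Prop) (HL : forall s d, P (LLeaf s d))
  (HN : forall l, Forall P l -> P (LNode l)) (X : layout) : P X :=
  match X with
  | LLeaf s d => HL s d
  | LNode l => HN l ((fix go (l : list layout) : Forall P l :=
                        match l with
                        | [] => Forall_nil _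
                        | x :: r => Forall_cons _ (layout_ind2 P HL HN x) (go r)
                        end) l)
  end.

Lemma shape_flat A : nt_flat (shape A) = map fst (lay_flat A).
Proof.
  induction A as [s d|l IH] using layout_ind2; [reflexivity|].
  cbn [shape nt_flat lay_flat]. induction IH as [|a r Ha _ IHr]; [reflexivity|].
  cbn [map flat_map]. rewrite map_app, Ha, IHr. reflexivity.
Qed.

Lemma size_pr A : nt_size (shape A) = pr (lay_flat A).
Proof. unfold nt_size, pr. rewrite shape_flat. reflexivity. Qed.

Lemma is_layout_posl A : is_layout A -> posl (lay_flat A).
Proof. unfold is_layout, posl. rewrite shape_flat, Forall_map. auto. Qed.

Lemma phi_eq_feq A B : phi_eq A B <-> feq (lay_flat A) (lay_flat B).
Proof.
  unfold phi_eq, feq, Phi. rewrite !size_pr.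
  split; intros [H1 H2]; split; auto; intros x Hx; specialize (H2 x Hx);
    rewrite !flat_phi_phir in *; auto.
Qed.

Lemma refines_node l' l : refines (NNode l') (NNode l) <-> Forall2 refines l' l.
Proof.
  revert l'; induction l as [|a l IH]; intros [|a' l']; cbn.
  - split; auto.
  - split; [tauto|intro H; inversion H].
  - split; [tauto|intro H; inversion H].
  - specialize (IH l'). cbn in IH. rewrite IH.
    split; [intros [H1 H2]; constructor; auto|intro H; inversion H; auto].
Qed.

Lemma prodl_app a b : prodl (a ++ b) = prodl a * prodl b.
Proof. unfold prodl. induction a; simpl; lia. Qed.

Lemma size_node l : nt_size (NNode l) = prodl (map nt_size l).
Proof.
  unfold nt_size. cbn [nt_flat]. induction l as [|a r IH]; [reflexivity|].
  cbn [flat_map map]. fold (prodl (nt_flat a ++ flat_map nt_flat r)).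
  rewrite prodl_app. unfold prodl in *. rewrite IH. reflexivity.
Qed.

Lemma refines_size X : forall X', refines X' X -> nt_size X' = nt_size X.
Proof.
  induction X as [n|l IH] using ntup_ind2; intros X' H.
  - cbn in H. rewrite H. unfold nt_size; cbn; lia.
  - destruct X' as [n|l']; [destruct H|].
    apply refines_node in H. rewrite !size_node. f_equal.
    revert l' H. induction IH as [|a r Ha _ IHr]; intros l' H; inversion H; subst; [reflexivity|].
    cbn. f_equal; auto.
Qed.

Fixpoint mz (ls : list layout) (l : list ntup) : list layout :=
  match ls, l with
  | a :: r, b :: r' => rel_coal a b :: mz r r'
  | _, _ => []
  end.

Lemma rel_coal_node ls l : rel_coal (LNode ls) (NNode l) = LNode (mz ls l).
Proof.
  revert ls; induction l as [|b l IH]; intros [|a ls]; try reflexivity.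
  specialize (IH ls). cbn in IH |- *. injection IH as IH. rewrite IH. reflexivity.
Qed.

Lemma posl_node a l : posl (lay_flat (LNode (a :: l))) -> posl (lay_flat a) /\ posl (lay_flat (LNode l)).
Proof. intro H. unfold posl in *. cbn [lay_flat flat_map] in H. apply Forall_app in H. exact H. Qed.

Definition PP (X : ntup) : Prop := forall A B, posl (lay_flat A) -> posl (lay_flat B) ->
  refines (shape A) X -> refines (shape B) X ->
  (feq (lay_flat A) (lay_flat B) <-> rel_coal A X = rel_coal B X).

Lemma node_list l : Forall PP l -> forall as_ bs, posl (lay_flat (LNode as_)) -> posl (lay_flat (LNode bs)) ->
  Forall2 refines (map shape as_) l -> Forall2 refines (map shape bs) l ->
  (feq (lay_flat (LNode as_)) (lay_flat (LNode bs)) <-> mz as_ l = mz bs l).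
Proof.
  induction 1 as [|X l HX _ IH]; intros as_ bs Pa Pb Ra Rb.
  - destruct as_; [|inversion Ra]. destruct bs; [|inversion Rb].
    split; auto. intros _. split; [reflexivity|]. auto.
  - destruct as_ as [|a as_]; [inversion Ra|]. destruct bs as [|b bs]; [inversion Rb|].
    inversion Ra; subst. inversion Rb; subst.
    apply posl_node in Pa. apply posl_node in Pb. destruct Pa as [Pa1 Pa2]. destruct Pb as [Pb1 Pb2].
    change (lay_flat (LNode (a :: as_))) with (lay_flat a ++ lay_flat (LNode as_)).
    change (lay_flat (LNode (b :: bs))) with (lay_flat b ++ lay_flat (LNode bs)).
    assert (E1 : pr (lay_flat a) = pr (lay_flat b)).
    { rewrite <- !size_pr. rewrite (refines_size X (shape a)), (refines_size X (shape b)) by assumption. reflexivity. }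
    assert (E2 : pr (lay_flat (LNode as_)) = pr (lay_flat (LNode bs))).
    { rewrite <- !size_pr. cbn [shape].
      rewrite (refines_size (NNode l) (NNode (map shape as_))), (refines_size (NNode l) (NNode (map shape bs)))
        by (apply refines_node; assumption). reflexivity. }
    rewrite block by assumption.
    rewrite (HX a b), (IH as_ bs) by assumption.
    cbn [mz]. split; [intros [-> ->]; reflexivity|intro H; injection H; auto].
Qed.

Lemma main_gen X : PP X.
Proof.
  induction X as [n|l IH] using ntup_ind2; intros A B PA PB RA RB.
  - apply leaf_case; assumption.
  - destruct A as [s d|as_]; [destruct RA|]. destruct B as [t e|bs]; [destruct RB|].
    cbn [shape] in RA, RB. apply refines_node in RA. apply refines_node in RB.
    rewrite !rel_coal_node, (node_list l IH as_ bs) by assumption.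
    split; [intros ->; reflexivity|intro H; injection H; auto].
Qed.

Theorem mainTheorem17 (A B : layout) (Sbar : ntup) :
  is_layout A -> is_layout B ->
  refines (shape A) Sbar -> refines (shape B) Sbar ->
  (phi_eq A B <-> rel_coal A Sbar = rel_coal B Sbar).
Proof.
  intros HA HB RA RB. rewrite phi_eq_feq.
  apply main_gen; auto using is_layout_posl.
Qed.
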